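(* Let $n$ and $0<n_1<\cdots<n_d<n$ be integers with $m_1=n_1$, $m_k=n_k-n_{k-1}$ ($2\le k\le d$), $m_{d+1}=n-n_d$, and regard $\mathrm{Flag}(n_1,\dots,n_d;n)=\{(VJ_1V^{\mathsf T},\dots,VJ_{d+1}V^{\mathsf T}):V\in\mathrm{O}(n)\}$ as a submanifold of $(\mathbb{R}^{n\times n})^{d+1}$ with the Frobenius inner product. Let $V(t)$ be a differentiable curve in $\mathrm{O}(n)$ with $\Lambda(t)=V(t)^{\mathsf T}\dot V(t)$, $\Lambda(k,k)\equiv0$ ($k=1,\dots,d+1$), $c(t)=V(t)(J_1,\dots,J_{d+1})V(t)^{\mathsf T}$, and let $X(t)\in\mathfrak{so}(n)$ be differentiable with $X(k,k)\equiv0$. Define \begin{align*} T_1(t)&=V(t)\big(\dot XJ_k-J_k\dot X\big)_{k=1}^{d+1}V(t)^{\mathsf T},\\ T_2(t)&=V(t)\big(\Lambda XJ_k+J_kX\Lambda\big)_{k=1}^{d+1}V(t)^{\mathsf T},\\ T_3(t)&=V(t)\big(\Lambda J_kX+XJ_k\Lambda\big)_{k=1}^{d+1}V(t)^{\mathsf T}. \end{align*} Then (1) $T_1(t)\in\mathbb{T}_{c(t)}\mathrm{Flag}(n_1,\dots,n_d;n)$; (2) the orthogonal projection of $T_2(t)$ onto $\mathbb{T}_{c(t)}\mathrm{Flag}(n_1,\dots,n_d;n)$ is $V(t)(W_1(t),\dots,W_{d+1}(t))V(t)^{\mathsf T}$, where \[ W_k(p,q)=\begin{cases}\sum_{s=1}^{d+1}X(k,s)\Lambda(s,q)-\sum_{s=1}^{d+1}\Lambda(s,k)^{\mathsf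 T}X(q,s)^{\mathsf T}, & p=k,\ q\neq k,\\[2pt] \sum_{s=1}^{d+1}\Lambda(s,p)^{\mathsf T}X(k,s)^{\mathsf T}-\sum_{s=1}^{d+1}X(p,s)\Lambda(s,k), & q=k,\ p\neq k,\\[2pt] 0, & \text{otherwise};\end{cases} \] (3) the orthogonal projection of $T_3(t)$ onto $\mathbb{T}_{c(t)}\mathrm{Flag}(n_1,\dots,n_d;n)$ is zero.
   Context: $J_k=\operatorname{diag}(-I_{m_1},\dots,-I_{m_{k-1}},I_{m_k},-I_{m_{k+1}},\dots,-I_{m_{d+1}})$ for $k=1,\dots,d+1$. $V(M_k)_{k=1}^{d+1}V^{\mathsf T}$ denotes $(VM_1V^{\mathsf T},\dots,VM_{d+1}V^{\mathsf T})$. For an $n\times n$ matrix $M$, $M(p,q)$ denotes its $(p,q)$ block in the partition $n=m_1+\cdots+m_{d+1}$. *)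

(* Defs.v *)
From mathcomp Require Import all_boot all_order all_algebra.
From mathcomp Require Import all_classical all_reals all_analysis.
Set Implicit Arguments. Unset Strict Implicit. Unset Printing Implicit Defensive.
Import Order.TTheory GRing.Theory Num.Theory.
Local Open Scope ring_scope.

Section FlagDefs.
Variable R : realType.

Definition mxderivable (m p : nat) (F : R -> 'M[R]_(m, p)) (t : R) : Prop :=
  forall i j, derivable (fun s => F s i j) t 1.
Definition mxderive (m p : nat) (F : R -> 'M[R]_(m, p)) (t : R) : 'M[R]_(m, p) :=
  \matrix_(i, j) derive1 (fun s => F s i j) t.

Definition is_orthogonal_mx (n : nat) (V : 'M[R]_n) : Prop := V^T *m V = 1%:M.
Definition is_skew_mx (n : nat) (X : 'M[R]_n) : Prop := X^T = - X.

Variables (n d : nat) (ns : nat -> nat).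
(* ns 1 < ... < ns d are n_1 < ... < n_d.  Row/column index i (0-based) lies in
   block blk i (0-based, in 0..d): blocks are [0,n_1), [n_1,n_2), ..., [n_d,n). *)
Definition blk (i : nat) : nat := (\sum_(1 <= k < d.+1) (ns k <= i : nat))%N.

Definition Jmx (k : 'I_d.+1) : 'M[R]_n :=
  \matrix_(i, j) (if i == j then (if blk i == k then 1 else -1) else 0).

Definition mxtuple := 'I_d.+1 -> 'M[R]_n.

Definition flag_pt (c : mxtuple) : Prop :=
  exists V : 'M[R]_n, is_orthogonal_mx V /\ forall k, c k = V *m Jmx k *m V^T.

Definition tangent_flag (c : mxtuple) (T : mxtuple) : Prop :=
  exists gamma : R -> mxtuple,
    (forall s, flag_pt (gamma s)) /\ (forall k, gamma 0 k = c k) /\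
    (forall k, mxderivable (fun s => gamma s k) 0) /\
    (forall k, mxderive (fun s => gamma s k) 0 = T k).

Definition frob (A B : mxtuple) : R := \sum_(k < d.+1) \tr ((A k)^T *m B k).

Definition is_orth_proj (S : mxtuple -> Prop) (T P : mxtuple) : Prop :=
  S P /\ forall Y, S Y -> frob (fun k => T k - P k) Y = 0.

Variables (V X : R -> 'M[R]_n).

Definition Lam (t : R) : 'M[R]_n := (V t)^T *m mxderive V t.
Definition cflag (t : R) : mxtuple := fun k => V t *m Jmx k *m (V t)^T.
Definition T1 (t : R) : mxtuple := fun k =>
  V t *m (mxderive X t *m Jmx k - Jmx k *m mxderive X t) *m (V t)^T.
Definition T2 (t : R) : mxtuple := fun k =>
  V t *m (Lam t *m X t *m Jmx k + Jmx k *m X t *m Lam t) *m (V t)^T.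
Definition T3 (t : R) : mxtuple := fun k =>
  V t *m (Lam t *m Jmx k *m X t + X t *m Jmx k *m Lam t) *m (V t)^T.

(* W_k, entrywise: entry (i,j) lies in block (p,q) = (blk i, blk j);
   sum_s X(k,s) Lam(s,q) at (i,j) = sum_l X i l * Lam l j, and
   sum_s Lam(s,k)^T X(q,s)^T at (i,j) = sum_l Lam l i * X j l, etc. *)
Definition Wmx (t : R) (k : 'I_d.+1) : 'M[R]_n :=
  \matrix_(i, j)
    if (blk i == k) && (blk j != k) then
      \sum_(l < n) X t i l * Lam t l j - \sum_(l < n) Lam t l i * X t j l
    else if (blk j == k) && (blk i != k) then
      \sum_(l < n) Lam t l i * X t j l - \sum_(l < n) X t i l * Lam t l j
    else 0.
Definition Wt (t : R) : mxtuple := fun k => V t *m Wmx t k *m (V t)^T.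

End FlagDefs.

Arguments Jmx {R n} d ns k.
Arguments flag_pt {R n} d ns c.
Arguments tangent_flag {R n} d ns c T.
Arguments cflag {R n} d ns V t _.
Arguments T1 {R n} d ns V X t _.
Arguments T2 {R n} d ns V X t _.
Arguments T3 {R n} d ns V X t _.
Arguments Wmx {R n} d ns V X t k.
Arguments Wt {R n} d ns V X t _.

(* Main.v *)
Require Import Defs.
From mathcomp Require Import all_boot all_order all_algebra.
From mathcomp Require Import all_classical all_reals all_analysis.
From mathcomp Require Import ring lra.
Import Order.TTheory GRing.Theory Num.Theory numFieldNormedType.Exports.
Local Open Scope ring_scope.
Local Open Scope classical_set_scope.

Section Aux.
Variable R : realType.

Lemma mxd_mul m p q (F : R -> 'M[R]_(m,p)) (G : R -> 'M[R]_(p,q)) t :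
  mxderivable F t -> mxderivable G t ->
  mxderivable (fun s => F s *m G s) t /\
  mxderive (fun s => F s *m G s) t = mxderive F t *m G t + F t *m mxderive G t.
Proof.
move=> dF dG.
have E i j : (fun s => (F s *m G s) i j) = \sum_(l < p) ((fun s => F s i l) * (fun s => G s l j)).
  by rewrite fct_sumE; apply/funext => s; rewrite mxE.
split.
  move=> i j; rewrite E; apply: derivable_sum => l; exact: derivableM.
apply/matrixP => i j; rewrite !mxE derive1E E derive_sum; last by move=> l; apply: derivableM.
rewrite -big_split /=; apply: eq_bigr => l _.
rewrite deriveM // !mxE !derive1E /=.
by rewrite addrC; congr (_ + _); exact: mulrC.
Qed.

Lemma mxd_add m p (F G : R -> 'M[R]_(m,p)) t :
  mxderivable F t -> mxderivable G t ->
  mxderivable (fun s => F s + G s) t /\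
  mxderive (fun s => F s + G s) t = mxderive F t + mxderive G t.
Proof.
move=> dF dG.
have E i j : (fun s => (F s + G s) i j) = (fun s => F s i j) + (fun s => G s i j).
  by apply/funext => s; rewrite mxE.
split; first by move=> i j; rewrite E; apply: derivableD.
apply/matrixP => i j; rewrite !mxE !derive1E E deriveD //.
Qed.

Lemma mxd_cst m p (A : 'M[R]_(m,p)) t :
  mxderivable (fun _ => A) t /\ mxderive (fun _ => A) t = 0.
Proof.
split; first by move=> i j; exact: derivable_cst.
apply/matrixP => i j; rewrite !mxE derive1E; exact: derive_cst.
Qed.

Lemma mxd_tr m p (F : R -> 'M[R]_(m,p)) t :
  mxderivable F t -> mxderivable (fun s => (F s)^T) t /\
  mxderive (fun s => (F s)^T) t = (mxderive F t)^T.
Proof.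
move=> dF; have E i j : (fun s => (F s)^T i j) = (fun s => F s j i).
  by apply/funext => s; rewrite mxE.
split; first by move=> i j; rewrite E.
by apply/matrixP => i j; rewrite !mxE E.
Qed.


End Aux.
Arguments mxd_mul {R m p q F G t}.
Arguments mxd_add {R m p F G t}.
Arguments mxd_cst {R m p} A t.
Arguments mxd_tr {R m p F t}.

Section Cay.
Variable R : realType.
Variable n : nat.

Lemma expand1 (P J : 'M[R]_n) (s : R) :
  (1%:M + s *: P) *m J *m (1%:M + s *: P)^T =
  J + s *: (P *m J + J *m P^T) + s^+2 *: (P *m J *m P^T).
Proof.
rewrite linearD /= trmx1 linearZ /=.
rewrite !mulmxDl !mulmxDr !mul1mx !mulmx1 -!scalemxAl -!scalemxAr scalerA -expr2 scalerDr !addrA.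
congr (_ + _); exact: addrAC.
Qed.

Lemma expand2 (Om E P J : 'M[R]_n) (s : R) : P = Om + s *: E -> Om^T = - Om ->
  (1%:M + s *: P) *m J *m (1%:M + s *: P)^T =
  J + s *: (Om *m J - J *m Om) + s^+2 *: (E *m J + J *m E^T + P *m J *m P^T).
Proof.
move=> hP hO; rewrite expand1.
have -> : P *m J + J *m P^T = Om *m J - J *m Om + s *: (E *m J + J *m E^T).
  rewrite hP linearD /= linearZ /= hO mulmxDl mulmxDr mulmxN -scalemxAl -scalemxAr.
  by rewrite scalerDr addrACA.
by rewrite scalerDr scalerA -expr2 addrA [s^+2 *: (_ + _ + P *m J *m P^T)]scalerDr addrA.
Qed.

Lemma conj3 (V A B C : 'M[R]_n) (s : R) :
  V *m (A + s *: B + s^+2 *: C) *m V^T =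
  V *m A *m V^T + s *: (V *m B *m V^T) + s^+2 *: (V *m C *m V^T).
Proof. by rewrite !mulmxDr !mulmxDl -!scalemxAr -!scalemxAl. Qed.

Lemma le_sum_nonneg (I : finType) (F : I -> R) i :
  (forall j, 0 <= F j) -> F i <= \sum_j F j.
Proof. by move=> h; rewrite (bigD1 i) //= lerDl sumr_ge0. Qed.

Lemma orth_bnd (W : 'M[R]_n) : W^T *m W = 1%:M -> forall i j, `|W i j| <= 1.
Proof.
move=> h i j.
have e : \sum_l W l j * W l j = 1.
  transitivity ((W^T *m W) j j); first by rewrite mxE; apply: eq_bigr => l _; rewrite mxE.
  by rewrite h mxE eqxx.
have : W i j * W i j <= 1.
  rewrite -e; apply: (@le_sum_nonneg _ (fun l => W l j * W l j) i).
  by move=> l; rewrite -expr2 sqr_ge0.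
move=> hh; rewrite ler_norml; apply/andP; split; nra.
Qed.

Lemma unit_skew (A : 'M[R]_n) : A^T = -A -> (1%:M - A) \in unitmx.
Proof.
move=> hA; rewrite unitmxE unitfE; apply/det0P => -[v vn0 vA].
have e1 : v = v *m A.
  by apply/eqP; rewrite -subr_eq0 -{1}(mulmx1 v) -mulmxBr vA.
have e2 : (v *m A *m v^T) 0 0 = 0.
  have : (v *m A *m v^T)^T = - (v *m A *m v^T).
    by rewrite !trmx_mul trmxK hA mulNmx mulmxN mulmxA.
  move: (v *m A *m v^T) => x /(congr1 (fun M : 'M[R]_1 => M 0 0)); rewrite !mxE => h; lra.
have e3 : (v *m v^T) 0 0 = 0 by rewrite {1}e1.
move: e3; rewrite mxE => /psumr_eq0P h.
have h0 : forall k, v 0 k = 0.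
  have hh : forall i, true -> 0 <= v 0 i * v^T i 0.
    by move=> i _; rewrite mxE -expr2 sqr_ge0.
  move=> k; have := h hh k isT.
  by rewrite mxE -expr2 => /eqP; rewrite sqrf_eq0 => /eqP.
move/eqP: vn0; apply; apply/matrixP => i j.
by rewrite (ord1 i) !mxE h0.
Qed.


Definition cM (Om : 'M[R]_n) (s : R) := 1%:M - (s / 2) *: Om.
Definition cN (Om : 'M[R]_n) (s : R) := 1%:M + (s / 2) *: Om.
Definition cU (Om : 'M[R]_n) (s : R) := invmx (cM Om s) *m cN Om s.
Definition cP (Om : 'M[R]_n) (s : R) := invmx (cM Om s) *m Om.

Section CayOm.
Variable Om : 'M[R]_n.
Hypothesis hOm : Om^T = - Om.

Lemma cM_unit s : cM Om s \in unitmx.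
Proof. by apply: unit_skew; rewrite linearZ /= hOm scalerN. Qed.

Lemma cN_cM s : cN Om s = cM Om (- s).
Proof. by rewrite /cM /cN mulNr scaleNr opprK. Qed.

Lemma cN_unit s : cN Om s \in unitmx.
Proof. by rewrite cN_cM; apply: cM_unit. Qed.

Lemma cMT s : (cM Om s)^T = cN Om s.
Proof. by rewrite /cM /cN linearB /= trmx1 linearZ /= hOm scalerN opprK. Qed.

Lemma cNT s : (cN Om s)^T = cM Om s.
Proof. by rewrite /cM /cN linearD /= trmx1 linearZ /= hOm scalerN. Qed.

Lemma cMN_comm s : cM Om s *m cN Om s = cN Om s *m cM Om s.
Proof.
rewrite /cM /cN; set a := (s / 2) *: Om.
apply: comm_mxD; first exact: comm_mx1.
apply: comm_mx_sym; apply: comm_mxB; [exact: comm_mx1 | exact: comm_mx_refl].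
Qed.

Lemma cU_orth s : (cU Om s)^T *m cU Om s = 1%:M.
Proof.
have hM := cM_unit s; have hN := cN_unit s.
have c1 : invmx (cN Om s) *m cM Om s = cM Om s *m invmx (cN Om s).
  rewrite -[LHS]mulmx1 -(mulmxV hN) !mulmxA -(mulmxA (invmx (cN Om s))) cMN_comm.
  by rewrite mulmxA (mulVmx hN) mul1mx.
rewrite /cU trmx_mul trmx_inv cMT cNT.
rewrite -c1 -mulmxA (mulmxA (cM Om s)) (mulmxV hM) mul1mx.
by rewrite (mulVmx hN).
Qed.

Lemma cU0 : cU Om 0 = 1%:M.
Proof. by rewrite /cU /cM /cN mul0r scale0r subr0 addr0 invmx1 mulmx1. Qed.

Lemma cU_P s : cU Om s = 1%:M + s *: cP Om s.
Proof.
have hM := cM_unit s.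
rewrite /cU.
have -> : cN Om s = cM Om s + s *: Om.
  rewrite /cM /cN -addrA; congr (_ + _).
  by rewrite -scaleNr -scalerDl; congr (_ *: _); field.
by rewrite mulmxDr (mulVmx hM) /cP scalemxAr.
Qed.

Lemma cP_E s : cP Om s = Om + s *: (2^-1 *: (cP Om s *m Om)).
Proof.
have hM := cM_unit s.
have e : invmx (cM Om s) = 1%:M + (s / 2) *: (invmx (cM Om s) *m Om).
  apply/eqP; rewrite -subr_eq; apply/eqP.
  by rewrite -(mulVmx hM) /cM mulmxBr mulmx1 scalemxAr.
rewrite scalerA /cP {1}e mulmxDl mul1mx -scalemxAl.
done.
Qed.

Lemma cP_U s : cP Om s = 2^-1 *: ((cU Om s + 1%:M) *m Om).
Proof.
have hM := cM_unit s.
have -> : cU Om s + 1%:M = 2%:R *: invmx (cM Om s).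
  rewrite /cU -(mulVmx hM) -mulmxDr /cN /cM addrACA subrr addr0.
  by rewrite mulmxDr mulmx1 scaler_nat mulr2n.
by rewrite -scalemxAl scalerA mulVf ?scale1r // pnatr_eq0.
Qed.

End CayOm.

Lemma deriv_rem (f q : R -> R) (a b C : R) :
  (forall s, f s = a + s * b + s ^+ 2 * q s) ->
  (forall s, `|s| <= 1 -> `|q s| <= C) ->
  derivable f 0 1 /\ derive1 f 0 = b.
Proof.
move=> Hf Hq.
have L : (fun h : R => h^-1 *: ((f \o shift 0) (h *: (1:R)) - f 0)) @ (0:R)^' --> (b:R).
  have E : {near (0:R)^', (fun h : R => b + h * q h) =1
      (fun h : R => h^-1 *: ((f \o shift 0) (h *: (1:R)) - f 0))}.
    near=> h.
    have hn0 : h != 0 by near: h; exact: nbhs_dnbhs_neq.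
    rewrite /= addr0 -[h%:A]/(h * 1) mulr1 -[_ *: _]/(_ * _) !Hf mul0r expr0n /= mul0r !addr0.
    have -> : a + h * b + h ^+ 2 * q h - a = h * (b + h * q h).
      by rewrite addrAC [a + _ - a]addrAC subrr add0r expr2 mulrDr mulrA.
    by rewrite mulKf.
  apply: cvg_trans (near_eq_cvg E) _.
  suff H0 : (fun h : R => h * q h) @ (0:R)^' --> (0:R).
    by have := cvgD (cvg_cst b) H0; move=> /(_ (dnbhs_filter _) (dnbhs_filter _)); rewrite addr0.
  apply/cvgr0Pnorm_lt => e e0.
  have C1 : 0 < `|C| + 1 by rewrite ltr_wpDl.
  near=> h.
  have h1 : `|h| < 1 by near: h; apply: dnbhs0_lt.
  have h2 : `|h| < e / (`|C| + 1) by near: h; apply: dnbhs0_lt; rewrite divr_gt0.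
  rewrite normrM.
  apply: (le_lt_trans (y := `|h| * (`|C| + 1))).
    apply: ler_wpM2l => //.
    apply: (le_trans (Hq h (ltW h1))).
    by rewrite (le_trans (ler_norm C)) // lerDl.
  by rewrite -ltr_pdivlMr.
split; first by apply/cvg_ex; exists b.
by rewrite derive1E; apply: cvg_lim.
Unshelve. all: by end_near.
Qed.

Definition mxbnd m p (F : R -> 'M[R]_(m,p)) :=
  exists C, 0 <= C /\ forall s, `|s| <= 1 -> forall i j, `|F s i j| <= C.
Arguments mxbnd {m p}.

Lemma bnd_cst m p (A : 'M[R]_(m,p)) : mxbnd (fun _ => A).
Proof.
exists (\sum_i \sum_j `|A i j|); split.
  by apply: sumr_ge0 => i _; apply: sumr_ge0.
move=> s _ i j.
apply: le_trans (@le_sum_nonneg _ (fun j => `|A i j|) j _) _ => [j'|]; first exact: normr_ge0.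
apply: (@le_sum_nonneg _ (fun i => \sum_j `|A i j|) i) => i'; exact: sumr_ge0.
Qed.

Lemma bnd_add m p (F G : R -> 'M[R]_(m,p)) :
  mxbnd F -> mxbnd G -> mxbnd (fun s => F s + G s).
Proof.
move=> [C1 [C10 h1]] [C2 [C20 h2]]; exists (C1 + C2); split; first exact: addr_ge0.
move=> s hs i j; rewrite mxE; apply: le_trans (ler_normD _ _) _.
by apply: lerD; [apply: h1 | apply: h2].
Qed.

Lemma bnd_mul m p q (F : R -> 'M[R]_(m,p)) (G : R -> 'M[R]_(p,q)) :
  mxbnd F -> mxbnd G -> mxbnd (fun s => F s *m G s).
Proof.
move=> [C1 [C10 h1]] [C2 [C20 h2]]; exists (p%:R * (C1 * C2)); split.
  by apply: mulr_ge0 => //; apply: mulr_ge0.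
move=> s hs i j; rewrite mxE; apply: le_trans (ler_norm_sum _ _ _) _.
have : \sum_(l < p) `|F s i l * G s l j| <= \sum_(l < p) (C1 * C2).
  apply: ler_sum => l _; rewrite normrM.
  by apply: ler_pM => //; [apply: h1 | apply: h2].
move=> h; apply: le_trans h _. by rewrite sumr_const cardT size_enum_ord mulr_natl.
Qed.

Lemma bnd_scl m p (c : R) (F : R -> 'M[R]_(m,p)) :
  mxbnd F -> mxbnd (fun s => c *: F s).
Proof.
move=> [C [C0 h]]; exists (`|c| * C); split; first exact: mulr_ge0.
move=> s hs i j; rewrite mxE normrM; apply: ler_wpM2l => //; exact: h.
Qed.

Lemma bnd_tr m p (F : R -> 'M[R]_(m,p)) :
  mxbnd F -> mxbnd (fun s => (F s)^T).
Proof.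
move=> [C [C0 h]]; exists C; split => // s hs i j; rewrite mxE; exact: h.
Qed.

Lemma tangent_skew (d : nat) (ns : nat -> nat) (V Om : 'M[R]_n) :
  V^T *m V = 1%:M -> Om^T = - Om ->
  tangent_flag d ns (fun k => V *m Jmx d ns k *m V^T)
    (fun k => V *m (Om *m Jmx d ns k - Jmx d ns k *m Om) *m V^T).
Proof.
move=> hV hOm.
pose E s := 2^-1 *: (cP Om s *m Om).
pose Q s k := V *m (E s *m Jmx d ns k + Jmx d ns k *m (E s)^T +
                    cP Om s *m Jmx d ns k *m (cP Om s)^T) *m V^T.
have key : forall s k, V *m cU Om s *m Jmx d ns k *m (V *m cU Om s)^T =
   V *m Jmx d ns k *m V^T + s *: (V *m (Om *m Jmx d ns k - Jmx d ns k *m Om) *m V^T)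
   + s^+2 *: Q s k.
  move=> s k.
  have -> : V *m cU Om s *m Jmx d ns k *m (V *m cU Om s)^T =
     V *m (cU Om s *m Jmx d ns k *m (cU Om s)^T) *m V^T by rewrite trmx_mul !mulmxA.
  rewrite (cU_P Om hOm) (expand2 _ _ _ _ _ (cP_E Om hOm s) hOm) -/(E s).
  by rewrite conj3.
have bP : mxbnd (cP Om).
  have -> : cP Om = fun s => 2^-1 *: ((cU Om s + 1%:M) *m Om).
    by apply/funext => s; rewrite cP_U.
  apply: bnd_scl; apply: bnd_mul; last exact: bnd_cst.
  apply: bnd_add; last exact: bnd_cst.
  exists 1; split => // s _; apply: orth_bnd; exact: (cU_orth Om hOm).
have bQ : forall k, mxbnd (fun s => Q s k).
  move=> k; apply: bnd_mul; last exact: bnd_cst.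
  apply: bnd_mul; first exact: bnd_cst.
  have bE : mxbnd E by apply: bnd_scl; apply: bnd_mul => //; exact: bnd_cst.
  apply: bnd_add; first apply: bnd_add.
  - by apply: bnd_mul => //; exact: bnd_cst.
  - by apply: bnd_mul; [exact: bnd_cst | exact: bnd_tr].
  - by apply: bnd_mul; [apply: bnd_mul => //; exact: bnd_cst | exact: bnd_tr].
exists (fun s k => V *m cU Om s *m Jmx d ns k *m (V *m cU Om s)^T).
split.
  move=> s; exists (V *m cU Om s); split => //.
  rewrite /is_orthogonal_mx trmx_mul -mulmxA (mulmxA V^T) hV mul1mx.
  exact: (cU_orth Om hOm).
split.
  by move=> k; rewrite cU0 mulmx1.
have hd : forall k i j, derivable (fun s => (V *m cU Om s *m Jmx d ns k *m (V *m cU Om s)^T) i j) 0 1 /\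
   derive1 (fun s => (V *m cU Om s *m Jmx d ns k *m (V *m cU Om s)^T) i j) 0 =
   (V *m (Om *m Jmx d ns k - Jmx d ns k *m Om) *m V^T) i j.
  move=> k i j; have [C [_ hC]] := bQ k.
  apply: (deriv_rem _ (fun s => Q s k i j) ((V *m Jmx d ns k *m V^T) i j) _ C).
    by move=> s; rewrite key !mxE.
  by move=> s hs; apply: hC.
split.
  by move=> k i j; case: (hd k i j).
by move=> k; apply/matrixP => i j; rewrite mxE; case: (hd k i j).
Qed.

End Cay.

Section Main.
Variable R : realType.
Variables (n d : nat) (ns : nat -> nat).

Local Notation J := (@Jmx R n d ns).

Lemma blk_lt (i : nat) : (blk d ns i < d.+1)%N.
Proof.
rewrite /blk ltnS.
apply: (@leq_trans (\sum_(1 <= k < d.+1) 1)%N); first by apply: leq_sum => k _; exact: leq_b1.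
by rewrite sum_nat_const_nat muln1 subn1.
Qed.

Definition bo (i : nat) : 'I_d.+1 := Ordinal (blk_lt i).

Definition ee (k : 'I_d.+1) (i : nat) : R := if blk d ns i == k then 1 else -1.

Lemma mulmx_diagr (A D : 'M[R]_n) i j :
  (forall a b, a != b -> D a b = 0) -> (A *m D) i j = A i j * D j j.
Proof.
move=> hD; rewrite mxE (bigD1 j) //= big1 ?addr0 // => m hm.
by rewrite hD ?mulr0.
Qed.

Lemma mulmx_diagl (A D : 'M[R]_n) i j :
  (forall a b, a != b -> D a b = 0) -> (D *m A) i j = D i i * A i j.
Proof.
move=> hD; rewrite mxE (bigD1 i) //= big1 ?addr0 // => m hm.
by rewrite hD ?mul0r // eq_sym.
Qed.

Lemma J_off k a b : a != b -> J k a b = 0.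
Proof. by rewrite mxE => /negbTE ->. Qed.

Lemma J_diag k a : J k a a = ee k a.
Proof. by rewrite mxE eqxx. Qed.

Lemma mulJr (A : 'M[R]_n) k i j : (A *m J k) i j = A i j * ee k j.
Proof. by rewrite mulmx_diagr ?J_diag // => a b; apply: J_off. Qed.

Lemma mulJl (A : 'M[R]_n) k i j : (J k *m A) i j = ee k i * A i j.
Proof. by rewrite mulmx_diagl ?J_diag // => a b; apply: J_off. Qed.

Lemma ee_bo (l m : nat) : ee (bo l) m = if blk d ns m == blk d ns l then 1 else -1.
Proof. by []. Qed.

Lemma Jp_off k (a b : 'I_n) : a != b -> (J k + 1%:M) a b = 0.
Proof. by move=> hab; rewrite !mxE (negbTE hab) addr0. Qed.

Lemma Jp_diag k (a : 'I_n) : (J k + 1%:M) a a = ee k a + 1.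
Proof. by rewrite !mxE eqxx. Qed.

Lemma JJ k j : (J k + 1%:M) *m (J j + 1%:M) = ((k == j)%:R * 2) *: (J k + 1%:M).
Proof.
have hD : forall a b : 'I_n, a != b -> (J j + 1%:M) a b = 0.
  by move=> a b hab; rewrite !mxE (negbTE hab) addr0.
apply/matrixP => a b; rewrite mulmx_diagr // !mxE.
case: eqP => [<-|hab]; last by rewrite /= add0r mul0r mulr0.
rewrite eqxx /= /ee.
case: (eqVneq k j) => [<-|hkj] /=.
  by case: eqP => _; rewrite mulr1n; lra.
rewrite mul0r.
case: (eqVneq (blk d ns a) k) => hk; case: (eqVneq (blk d ns a) j) => hj.
- by case/eqP: hkj; apply/val_inj; rewrite /= -hk -hj.
- lra.
- lra.
- lra.
Qed.

Lemma tangent_constr (V : 'M[R]_n) (Y : mxtuple R n d) :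
  V^T *m V = 1%:M -> tangent_flag d ns (fun k => V *m J k *m V^T) Y ->
  forall k j, (V^T *m Y k *m V) *m (J j + 1%:M) + (J k + 1%:M) *m (V^T *m Y j *m V)
     = ((k == j)%:R * 2) *: (V^T *m Y k *m V).
Proof.
move=> hV [g [hfl [h0 [hder hval]]]] k j.
have VVt : V *m V^T = 1%:M by apply: mulmx1C.
have alg : forall s, (g s k + 1%:M) *m (g s j + 1%:M) = ((k == j)%:R * 2) *: (g s k + 1%:M).
  move=> s; have [W [hW hg]] := hfl s; rewrite !hg.
  have WWt : W *m W^T = 1%:M by apply: mulmx1C.
  have e : forall k', W *m J k' *m W^T + 1%:M = W *m (J k' + 1%:M) *m W^T.
    by move=> k'; rewrite mulmxDr mulmxDl mulmx1 WWt.
  rewrite !e !mulmxA -(mulmxA _ W^T W) hW mulmx1 -(mulmxA W) JJ.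
  by rewrite -scalemxAr -scalemxAl.
have dF : forall k', mxderivable (fun s => g s k' + 1%:M) 0 /\
     mxderive (fun s => g s k' + 1%:M) 0 = Y k'.
  move=> k'; have [d1 e1] := mxd_add (hder k') (mxd_cst (1%:M : 'M[R]_n) 0).1.
  by split => //; rewrite e1 hval (mxd_cst _ 0).2 addr0.
have [_ eL] := mxd_mul (dF k).1 (dF j).1.
have eR : mxderive (fun s => ((k == j)%:R * 2) *: (g s k + 1%:M)) 0 = ((k == j)%:R * 2) *: Y k.
  apply/matrixP => a b; rewrite !mxE -(dF k).2 mxE !derive1E.
  have -> : (fun s => (((k == j)%:R * 2) *: (g s k + 1%:M)) a b) =
            ((k == j)%:R * 2) \*: (fun s => (g s k + 1%:M) a b).
    by apply/funext => s; rewrite [LHS]mxE.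
  by rewrite deriveZ //; apply: (dF k).1.
have eq : mxderive (fun s => (g s k + 1%:M) *m (g s j + 1%:M)) 0 =
          mxderive (fun s => ((k == j)%:R * 2) *: (g s k + 1%:M)) 0.
  by congr mxderive; apply/funext => s; apply: alg.
rewrite eL eR (dF k).2 (dF j).2 !h0 in eq.
have := congr1 (fun M => V^T *m M *m V) eq.
have c1 : forall k', V *m J k' *m V^T + 1%:M = V *m (J k' + 1%:M) *m V^T.
  by move=> k'; rewrite mulmxDr mulmxDl mulmx1 VVt.
rewrite /= !c1 mulmxDr mulmxDl -scalemxAr -scalemxAl => <-.
congr (_ + _).
  by rewrite !mulmxA -(mulmxA _ V^T V) hV mulmx1.
by rewrite !mulmxA hV mul1mx.
Qed.

Lemma frob_conj (V : 'M[R]_n) (A Y : mxtuple R n d) :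
  frob (fun k => V *m A k *m V^T) Y =
  \sum_k \sum_i \sum_l A k l i * (V^T *m Y k *m V) l i.
Proof.
rewrite /frob; apply: eq_bigr => k _.
have -> : \tr ((V *m A k *m V^T)^T *m Y k) = \tr ((A k)^T *m (V^T *m Y k *m V)).
  by rewrite !trmx_mul trmxK -mulmxA mxtrace_mulC [LHS]mxtrace_mulC -[in LHS]mulmxA [LHS]mxtrace_mulC !mulmxA.
rewrite /mxtrace; apply: eq_bigr => i _; rewrite mxE; apply: eq_bigr => l _.
by rewrite mxE.
Qed.

Lemma sum_zero (Z A : mxtuple R n d) :
  (forall (k : 'I_d.+1) (l i : 'I_n), (blk d ns l == k) = (blk d ns i == k) -> Z k l i = 0) ->
  (forall l i : 'I_n, blk d ns l != blk d ns i -> Z (bo l) l i = - Z (bo i) l i) ->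
  (forall l i : 'I_n, blk d ns l != blk d ns i -> A (bo l) l i = A (bo i) l i) ->
  \sum_k \sum_i \sum_l A k l i * Z k l i = 0.
Proof.
move=> F1 F2 HA.
rewrite exchange_big; apply: big1 => i _; rewrite exchange_big; apply: big1 => l _.
case: (eqVneq (blk d ns l) (blk d ns i)) => h.
  by apply: big1 => k _; rewrite F1 ?mulr0 // h.
have hne : bo i != bo l by apply/eqP => /(congr1 val) /= e; move/eqP: h; rewrite e.
rewrite (bigD1 (bo l)) //= (bigD1 (bo i)) //= big1 ?addr0.
  by rewrite F2 // HA // mulrN addNr.
move=> k /andP [hk1 hk2]; rewrite F1 ?mulr0 //.
have -> : (blk d ns l == k) = false.
  by apply/negbTE; apply: contra hk1 => /eqP e; apply/eqP/val_inj; rewrite /= e.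
have -> : (blk d ns i == k) = false.
  by apply/negbTE; apply: contra hk2 => /eqP e; apply/eqP/val_inj; rewrite /= e.
by [].
Qed.

Lemma orth_gen (V : 'M[R]_n) (A Y : mxtuple R n d) :
  V^T *m V = 1%:M -> tangent_flag d ns (fun k => V *m J k *m V^T) Y ->
  (forall l i : 'I_n, blk d ns l != blk d ns i -> A (bo l) l i = A (bo i) l i) ->
  frob (fun k => V *m A k *m V^T) Y = 0.
Proof.
move=> hV hT HA; rewrite frob_conj; apply: sum_zero => //.
- move=> k l i e.
  have := congr1 (fun M : 'M[R]_n => M l i) (tangent_constr _ _ hV hT k k).
  rewrite /=; move: (V^T *m Y k *m V) => Z.
  rewrite eqxx /= mxE (mulmx_diagr _ _ _ _ (@Jp_off k)) (mulmx_diagl _ _ _ _ (@Jp_off k)).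
  rewrite !Jp_diag mxE /ee e; case: (blk d ns i == k) => /=; lra.
- move=> l i hli.
  have := congr1 (fun M : 'M[R]_n => M l i) (tangent_constr _ _ hV hT (bo l) (bo i)).
  have hne : (bo l == bo i) = false.
    by apply/negbTE/eqP => /(congr1 val) /= e; move/eqP: hli.
  rewrite /=; move: (V^T *m Y (bo l) *m V) (V^T *m Y (bo i) *m V) => Z1 Z2.
  rewrite hne /= mxE (mulmx_diagr _ _ _ _ (@Jp_off _)) (mulmx_diagl _ _ _ _ (@Jp_off _)).
  rewrite !Jp_diag mxE /ee /= !eqxx; lra.
Qed.

End Main.

Arguments orth_gen {R n d ns} V A Y.
Arguments tangent_skew {R n} d ns V Om.
Arguments mulJr {R n d ns} A k i j.
Arguments mulJl {R n d ns} A k i j.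

Lemma addE (R : realType) n (P Q : 'M[R]_n) l i : (P + Q) l i = P l i + Q l i.
Proof. by rewrite mxE. Qed.

Lemma subE (R : realType) n (P Q : 'M[R]_n) l i : (P - Q) l i = P l i - Q l i.
Proof. by rewrite !mxE. Qed.

Lemma trip (R : realType) n d ns (A B : 'M[R]_n) k l i :
  (A *m Jmx d ns k *m B) l i = \sum_m A l m * ee R d ns k m * B m i.
Proof. by rewrite mxE; apply: eq_bigr => m _; rewrite mulJr. Qed.

Theorem lemmaB1 (R : realType) (n d : nat) (ns : nat -> nat)
  (hd : (0 < d)%N) (h1 : (0 < ns 1)%N)
  (hinc : forall k, (1 <= k < d)%N -> (ns k < ns k.+1)%N)
  (hn : (ns d < n)%N)
  (V X : R -> 'M[R]_n)
  (hVo : forall t, is_orthogonal_mx (V t)) (hVd : forall t, mxderivable V t)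
  (hL : forall t (i j : 'I_n), blk d ns i = blk d ns j -> Lam V t i j = 0)
  (hXs : forall t, is_skew_mx (X t)) (hXd : forall t, mxderivable X t)
  (hX : forall t (i j : 'I_n), blk d ns i = blk d ns j -> X t i j = 0)
  (t : R) :
  tangent_flag d ns (cflag d ns V t) (T1 d ns V X t) /\
  is_orth_proj (tangent_flag d ns (cflag d ns V t)) (T2 d ns V X t) (Wt d ns V X t) /\
  is_orth_proj (tangent_flag d ns (cflag d ns V t)) (T3 d ns V X t) (fun _ => 0).
Proof.
have hV : (V t)^T *m V t = 1%:M := hVo t.
have Xe : forall a b, X t a b = - X t b a.
  move=> a b; have := congr1 (fun M : 'M[R]_n => M b a) (hXs t).
  by rewrite !mxE => ->.
have hLs : (Lam V t)^T = - Lam V t.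
  have [d1 e1] := mxd_mul (mxd_tr (hVd t)).1 (hVd t).
  have e0 : mxderive (fun s => (V s)^T *m V s) t = 0.
    have -> : (fun s => (V s)^T *m V s) = (fun _ => 1%:M) by apply/funext => s; apply: hVo.
    exact: (mxd_cst _ t).2.
  rewrite e1 (mxd_tr (hVd t)).2 in e0.
  rewrite /Lam trmx_mul trmxK; apply/eqP; rewrite -subr_eq0 opprK; exact/eqP.
have Le : forall a b, Lam V t a b = - Lam V t b a.
  move=> a b; have := congr1 (fun M : 'M[R]_n => M b a) hLs.
  by rewrite !mxE => ->.
have hdX : (mxderive X t)^T = - mxderive X t.
  apply/matrixP => i j; rewrite !mxE !derive1E.
  have -> : (fun s => X s j i) = - (fun s => X s i j).
    apply/funext => s; have := congr1 (fun M : 'M[R]_n => M i j) (hXs s).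
    by rewrite !mxE => ->.
  by rewrite deriveN //; apply: hXd.
split; first exact: (tangent_skew d ns (V t) (mxderive X t) hV hdX).
split.
  pose G := \matrix_(l, i) (\sum_m X t l m * Lam V t m i - \sum_m Lam V t m l * X t i m).
  have hG : G^T = - G.
    apply/matrixP => i l; rewrite !mxE opprB; congr (_ - _); apply: eq_bigr => m _; exact: mulrC.
  pose Om := - (2^-1) *: G.
  have hOm : Om^T = - Om by rewrite /Om linearZ /= hG scalerN.
  split.
    have -> : Wt d ns V X t = fun k => V t *m (Om *m Jmx d ns k - Jmx d ns k *m Om) *m (V t)^T.
      apply/funext => k; rewrite /Wt; congr (_ *m _ *m _).
      apply/matrixP => l i; rewrite subE mulJr mulJl /Om !mxE /ee.
      case: (blk d ns l == k); case: (blk d ns i == k) => /=; lra.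
    exact: (tangent_skew d ns (V t) Om hV hOm).
  move=> Y hY.
  have -> : (fun k => T2 d ns V X t k - Wt d ns V X t k) =
     fun k => V t *m (Lam V t *m X t *m Jmx d ns k + Jmx d ns k *m (X t *m Lam V t)
                      - Wmx d ns V X t k) *m (V t)^T.
    by apply/funext => k; rewrite /T2 /Wt -mulmxBl -mulmxBr mulmxA.
  apply: (orth_gen (V t) _ Y hV hY) => l i hli.
  rewrite !subE !addE !mulJr !mulJl /ee /= eqxx [blk d ns i == blk d ns l]eq_sym (negbTE hli).
  rewrite /Wmx !mxE /= eqxx [blk d ns i == blk d ns l]eq_sym (negbTE hli) /=.
  have G2e : \sum_m Lam V t m l * X t i m = \sum_m Lam V t l m * X t m i.
    by apply: eq_bigr => m _; rewrite Le (Xe i m) mulrNN.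
  rewrite eqxx /= G2e; lra.
split.
  have h00 : (0 : 'M[R]_n)^T = - 0 by rewrite linear0 oppr0.
  have := tangent_skew d ns (V t) 0 hV h00.
  have -> : (fun k => V t *m (0 *m Jmx d ns k - Jmx d ns k *m 0) *m (V t)^T) = fun _ => 0.
    by apply/funext => k; rewrite mul0mx mulmx0 subrr mulmx0 mul0mx.
  by [].
move=> Y hY.
have -> : (fun k => T3 d ns V X t k - 0) =
   fun k => V t *m (Lam V t *m Jmx d ns k *m X t + X t *m Jmx d ns k *m Lam V t) *m (V t)^T.
  by apply/funext => k; rewrite subr0.
apply: (orth_gen (V t) _ Y hV hY) => l i hli.
rewrite !addE !trip -!big_split /=; apply: eq_bigr => m _.
rewrite /ee /=.
case: (eqVneq (blk d ns m) (blk d ns l)) => hml.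
  by rewrite (hL t l m (esym hml)) (hX t l m (esym hml)) !mul0r.
case: (eqVneq (blk d ns m) (blk d ns i)) => hmi.
  by rewrite (hX t m i hmi) (hL t m i hmi) !mulr0.
by [].
Qed.
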